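(* Let $U,V$ be nonempty finite words over the alphabet $\{-1,1\}$ and let $W=w_1\cdots w_\ell$ ($\ell\ge1$) be a word over the two-letter alphabet $\{U,V\}$; let $X=w_\ell\cdots w_1$ be the reversed word over $\{U,V\}$. Let $\widetilde W,\widetilde X\in\{-1,1\}^N$ be the words over $\{-1,1\}$ obtained by concatenating the words $U,V$ as they appear in $W$, resp. $X$, where $N=|W|_U|U|+|W|_V|V|$, and regard them as elements of $G_F$, $F=\mathbb Z/N\mathbb Z$. Then $A_F(\widetilde X)=A_F(\widetilde W)$.
   Context: $|W|_U$ denotes the number of occurrences of the letter $U$ in $W$, and $|U|$ the length of $U$. A word $v_1\cdots v_N$ over $\{-1,1\}$ is identified with $\sigma\in G_F=\{-1,1\}^{\mathbb Z/N\mathbb Z}$ by $\sigma_i=v_i$ (indices mod $N$). The correlation map is $A_F(\sigma)_f=\sum_{m\in F}\sigma_m\sigma_{m+f}$. *)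

(* Defs.v *)
From mathcomp Require Import all_boot all_order all_algebra.
Set Implicit Arguments. Unset Strict Implicit. Unset Printing Implicit Defensive.
Import GRing.Theory Num.Theory.
Local Open Scope ring_scope.

Definition pm1_word (s : seq int) : bool := all (fun x => (x == 1) || (x == -1)) s.

(* A word over the two-letter alphabet {U,V}: true encodes U, false encodes V.
   [subst_word U V W] concatenates U and V as they appear in W. *)
Definition subst_word (U V : seq int) (W : seq bool) : seq int :=
  flatten [seq (if b then U else V) | b <- W].

(* Periodic correlation over F = Z/NZ, N = size s, with sigma_i = s_(i mod N):
   A_F(sigma)_f = sum_{m in Z/NZ} sigma_m sigma_{m+f}. *)
Definition corr (s : seq int) (f : nat) : int :=
  let N := size s in \sum_(m < N) s`_m * s`_((m + f) %% N)%N.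

(* Main.v *)
Require Import Defs.
From mathcomp Require Import all_boot all_order all_algebra.
From mathcomp Require Import zify ring lra.
Set Implicit Arguments. Unset Strict Implicit. Unset Printing Implicit Defensive.

Definition wf (W : seq bool) (k : nat) : bool := nth false W (k %% size W).
Definition cntf W k r := (\sum_(i < r) wf W (k + i))%N.

Lemma wf_per W k : wf W (k + size W) = wf W k.
Proof. by rewrite /wf modnDr. Qed.

Lemma cntf_per W k r : cntf W (k + size W) r = cntf W k r.
Proof. apply: eq_bigr => i _; by rewrite addnAC wf_per. Qed.

Lemma cntfS W k r : cntf W k r.+1 = (wf W k + cntf W k.+1 r)%N.
Proof. by rewrite /cntf big_ord_recl addn0; congr (_ + _)%N; apply: eq_bigr => i _; rewrite /= addSnnS. Qed.

Lemma cntfR W k r : cntf W k r.+1 = (cntf W k r + wf W (k + r))%N.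
Proof. by rewrite /cntf big_ord_recr. Qed.

Lemma cntf_le W k r : (cntf W k r <= r)%N.
Proof.
elim: r => [|r IH]; first by rewrite /cntf big_ord0.
rewrite cntfR; case: (wf W (k + r)) => /=; lia.
Qed.

Lemma sum_shift n (g : nat -> nat) : g n = g 0%N ->
  (\sum_(k < n) g k.+1 = \sum_(k < n) g k)%N.
Proof.
case: n => [|n] H; first by rewrite !big_ord0.
rewrite big_ord_recr big_ord_recl /= H addnC; congr (_ + _)%N.
Qed.

Lemma count_first_last W r c0 : (0 < size W)%N ->
  (\sum_(k < size W) (wf W k && (cntf W k r.+1 == c0)))%N =
  (\sum_(k < size W) (wf W (k + r) && (cntf W k r.+1 == c0)))%N.
Proof.
move=> Wn; set n := size W.
pose C k := cntf W k r.+1.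
pose a c := (\sum_(k < n) (wf W k && (C k == c)))%N.
pose a' c := (\sum_(k < n) (~~ wf W k && (C k == c)))%N.
pose b c := (\sum_(k < n) (wf W (k + r) && (C k == c)))%N.
pose b' c := (\sum_(k < n) (~~ wf W (k + r) && (C k == c)))%N.
have E1 c : (a c + a' c = b c + b' c)%N.
  rewrite /a /a' /b /b' -!big_split /=; apply: eq_bigr => k _.
  by case: (wf W k); case: (wf W (k + r)); case: (C k == c).
have E2 c : (a c.+1 + a' c = b c.+1 + b' c)%N.
  have -> : (a c.+1 + a' c = \sum_(k < n) (cntf W k.+1 r == c))%N.
    rewrite /a /a' -big_split /=; apply: eq_bigr => k _.
    by rewrite /C cntfS; case: (wf W k) => /=; rewrite ?add1n ?add0n ?addn0 ?eqSS.
  have -> : (b c.+1 + b' c = \sum_(k < n) (cntf W k r == c))%N.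
    rewrite /b /b' -big_split /=; apply: eq_bigr => k _.
    by rewrite /C cntfR; case: (wf W (k + r)) => /=; rewrite ?addn1 ?addn0 ?eqSS //=; case: eqP.

  have H := (@sum_shift n (fun k : nat => nat_of_bool (cntf W k r == c))); rewrite /= in H; rewrite H //.
  by rewrite -{1}(add0n n) cntf_per.
have Z c : (r.+1 < c)%N -> a c = 0%N /\ b c = 0%N.
  move=> hc; split; apply: big1 => k _;
  by have := cntf_le W k r.+1; rewrite /C; case: eqP => [->|]; [lia| rewrite andbF].
suff H : forall d c, (r.+2 <= c + d)%N -> a c = b c by apply: (H r.+2); lia.
elim=> [|d IH] c hc.
  by have [-> ->] := Z c ltac:(lia).
have h1 := IH c.+1 ltac:(lia).
have := E1 c; have := E2 c; rewrite h1; lia.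
Qed.

Import GRing.Theory Num.Theory.
Local Open Scope ring_scope.

Lemma sum_pick m x (K : nat -> int) : (x < m)%N ->
  \sum_(c < m) (x == c)%:R * K c = K x.
Proof.
move=> hx; rewrite (bigD1 (Ordinal hx)) //= eqxx mul1r big1 ?addr0 // => i /negbTE.
by rewrite eq_sym -(inj_eq val_inj) /= => ->; rewrite mul0r.
Qed.

Lemma sym_sum W j (G : bool -> bool -> nat -> int) : (0 < size W)%N ->
  \sum_(k < size W) G (wf W k) (wf W (k + j)) (cntf W k j.+1) =
  \sum_(k < size W) G (wf W (k + j)) (wf W k) (cntf W k j.+1).
Proof.
move=> Wn.
have key (K : nat -> int) : \sum_(k < size W) (wf W k)%:R * K (cntf W k j.+1) =
   \sum_(k < size W) (wf W (k + j))%:R * K (cntf W k j.+1).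
  have E (x : bool) k : x%:R * K (cntf W k j.+1) =
      \sum_(c < j.+2) (x && (cntf W k j.+1 == c))%:R * K c.
    rewrite -(@sum_pick j.+2 (cntf W k j.+1)) ?ltnS ?cntf_le //.
    rewrite mulr_sumr; apply: eq_bigr => c _.
    by case: x => /=; rewrite ?mul1r ?mul0r.
  under eq_bigr do rewrite E.
  under [RHS]eq_bigr do rewrite E.
  rewrite exchange_big [RHS]exchange_big /=; apply: eq_bigr => c _.
  rewrite -!mulr_suml -!natr_sum; congr (_ * _); congr (_%:R).
  exact: count_first_last.
have P x y c : G x y c = G y x c + (x%:R - y%:R) * (G true false c - G false true c).
  by case: x; case: y => /=; ring.
under eq_bigr do rewrite P.
rewrite big_split /=; under [X in _ + X]eq_bigr do rewrite mulrBl.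
rewrite sumrB.
have /= -> := key (fun c => G true false c - G false true c).
by rewrite subrr addr0.
Qed.


Lemma wrev W a b : (0 < size W)%N -> ((a + b).+1 %% size W = 0)%N -> wf (rev W) a = wf W b.
Proof.
move=> Wn H; rewrite /wf size_rev nth_rev ?ltn_pmod //.
set n := size W in Wn H *.
have hx : ((a %% n + b %% n).+1 %% n = 0)%N.
  by rewrite -addn1 -modnDml modnDm modnDml addn1.
have ha := ltn_pmod a Wn; have hb := ltn_pmod b Wn.
move: hx; set x := (a %% n + b %% n).+1 => hx.
have := divn_eq x n; rewrite hx addn0.
case: (x %/ n)%N => [|[|q]] /=; rewrite /x; [lia| rewrite mul1n => e | nia].
congr nth; lia.
Qed.

Lemma refl_sum W j (F : bool -> bool -> nat -> int) : (0 < size W)%N ->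
  \sum_(k < size W) F (wf (rev W) k) (wf (rev W) (k + j)) (cntf (rev W) k j) =
  \sum_(k < size W) F (wf W (k + j)) (wf W k) (cntf W k.+1 j).
Proof.
move=> Wn; set n := size W.
pose C := (n * j.+2)%N.
pose hf (k : 'I_n) : 'I_n := Ordinal (ltn_pmod (C - (k + j).+1) Wn).
have Cge (k : 'I_n) : ((k + j).+1 <= C)%N.
  have := ltn_ord k; rewrite /C mulnS; nia.
have hinj : injective hf.
  move=> k1 k2 /(congr1 val) /= e; apply: val_inj => /=.
  have e2 : ((C - (k1 + j).+1) + k1 == (C - (k2 + j).+1) + k1 %[mod n])%N.
    by rewrite -modnDml e modnDml.
  have E : (C - (k1 + j).+1 + k1 = C - (k2 + j).+1 + k2)%N.
    by have := Cge k1; have := Cge k2; lia.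
  move: e2; rewrite E eqn_modDl !modn_small //.
  by move/eqP.
rewrite [RHS](reindex_inj hinj); apply: eq_bigr => k _.
set q := nat_of_ord (hf k).
have key t s : (t + s = k + j + q)%N -> wf (rev W) t = wf W s.
  move=> ts; apply: wrev => //; rewrite ts /q /= -addSn modnDmr subnKC ?Cge //.
  by rewrite /C mulnC modnMl.
rewrite (key k (q + j)); last lia.
congr F; first by apply: key; lia.
rewrite /cntf (reindex_inj rev_ord_inj); apply: eq_bigr => i _ /=.
congr nat_of_bool; apply: key; have := ltn_ord i; lia.
Qed.


Definition blk (U V : seq int) (b : bool) := if b then U else V.
Definition Pp U V W0 k := (\sum_(i < k) size (blk U V (wf W0 i)))%N.

Lemma nth_flat (ss : seq (seq int)) k a : (k < size ss)%N ->
  (a < size (nth [::] ss k))%N ->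
  nth 0 (flatten ss) ((\sum_(i < k) size (nth [::] ss i)) + a)%N = nth 0 (nth [::] ss k) a.
Proof.
elim: ss k => [|x ss IH] [|k] //= hk ha.
  by rewrite big_ord0 add0n nth_cat ha.
rewrite big_ord_recl /= nth_cat -addnA ltnNge leq_addr /= addKn.
exact: IH.
Qed.

Definition Pl (l : nat -> nat) k := (\sum_(i < k) l i)%N.

Lemma PlS l k : Pl l k.+1 = (Pl l k + l k)%N.
Proof. by rewrite /Pl big_ord_recr. Qed.

Lemma decomp (l : nat -> nat) (g : nat -> int) n :
  \sum_(0 <= m < Pl l n) g m =
  \sum_(k < n) \sum_(a < l k) g (Pl l k + a)%N.
Proof.
elim: n => [|n IH]; first by rewrite big_ord0 /Pl big_ord0 big_geq.
rewrite [in RHS]big_ord_recr /= -IH PlS.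
rewrite (big_cat_nat _ (n:=Pl l n)) //= ?leq_addr //; congr (_ + _).
rewrite -{1}(add0n (Pl l n)) big_addn addKn big_mkord.
by apply: eq_bigr => i _; rewrite addnC.
Qed.

Lemma count1 (Q L M : nat) :
  (\sum_(b < L) (Q + b == M))%N = ((Q <= M) && (M < Q + L))%N.
Proof.
elim: L => [|L IH]; first by rewrite big_ord0 addn0 ltnNge; case: (Q <= M)%N.
rewrite big_ord_recr /= IH addnS; case: (Q + L =P M) => e;
  case: (leqP Q M) => h1; case: (ltnP M (Q + L)) => h2;
  case: (ltnP M (Q + L).+1) => h3 /=; lia.
Qed.


Definition lb U V W0 i := size (blk U V (wf W0 i)).

Lemma Pl_add l k j : Pl l (k + j) = (Pl l k + \sum_(i < j) l (k + i))%N.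
Proof.
elim: j => [|j IH]; first by rewrite big_ord0 !addn0.
by rewrite addnS PlS IH big_ord_recr /= addnA.
Qed.

Lemma Pl_mono l i i' : (i <= i')%N -> (Pl l i <= Pl l i')%N.
Proof. by move/subnKC <-; rewrite Pl_add leq_addr. Qed.

Lemma Lsum U V W0 k j :
  (\sum_(i < j) lb U V W0 (k + i))%N =
  (cntf W0 k j * size U + (j - cntf W0 k j) * size V)%N.
Proof.
elim: j => [|j IH]; first by rewrite big_ord0 /cntf big_ord0.
rewrite big_ord_recr /= IH cntfR /lb /blk.
have := cntf_le W0 k j.
case: (wf W0 (k + j)) => /= h; nia.
Qed.

Lemma Pl_per U V W0 q r :
  Pl (lb U V W0) (q * size W0 + r) = (q * Pl (lb U V W0) (size W0) + Pl (lb U V W0) r)%N.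
Proof.
have h m : Pl (lb U V W0) (size W0 + m) = (Pl (lb U V W0) (size W0) + Pl (lb U V W0) m)%N.
  rewrite Pl_add; congr (_ + _)%N.
  rewrite /Pl; apply: eq_bigr => i _; by rewrite /lb addnC wf_per.
elim: q => [|q IH] //.
by rewrite mulSn -addnA h IH addnA.
Qed.

Lemma size_s U V W0 : size (subst_word U V W0) = Pl (lb U V W0) (size W0).
Proof.
rewrite /subst_word size_flatten /shape -map_comp /Pl.
rewrite sumnE big_map (big_nth false) big_mkord; apply: eq_bigr => i _.
by rewrite /lb /wf modn_small.
Qed.

Lemma nth_s U V W0 r a : (r < size W0)%N -> (a < lb U V W0 r)%N ->
  (subst_word U V W0)`_(Pl (lb U V W0) r + a) = (blk U V (wf W0 r))`_a.
Proof.
move=> hr ha.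
have e : Pl (lb U V W0) r = (\sum_(i < r) size (nth [::] [seq blk U V b | b <- W0] i))%N.
  rewrite /Pl; apply: eq_bigr => i _.
  by rewrite (nth_map false) /lb /wf ?modn_small // (ltn_trans _ hr).
rewrite e /subst_word nth_flat ?size_map // (nth_map false) //.
  by rewrite /wf modn_small.
by move: ha; rewrite /lb /wf modn_small.
Qed.


Lemma wf_mod W k : wf W (k %% size W) = wf W k.
Proof. by rewrite /wf modn_mod. Qed.

Lemma lb_le U V W0 k : (0 < size W0)%N -> (lb U V W0 k <= Pl (lb U V W0) (size W0))%N.
Proof.
move=> Wn; have hr := ltn_pmod k Wn.
have -> : lb U V W0 k = lb U V W0 (k %% size W0) by rewrite /lb wf_mod.
by apply: leq_trans (Pl_mono _ hr); rewrite PlS leq_addl.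
Qed.

Lemma sp_blk U V W0 k a : (0 < size W0)%N -> (a < lb U V W0 k)%N ->
  (subst_word U V W0)`_((Pl (lb U V W0) k + a) %% Pl (lb U V W0) (size W0)) =
  (blk U V (wf W0 k))`_a.
Proof.
move=> Wn ha; set n := size W0; set l := lb U V W0.
have hr := ltn_pmod k Wn.
have lk : l k = l (k %% n)%N by rewrite /l /lb wf_mod.
rewrite {1}(divn_eq k n) Pl_per -addnA modnMDl modn_small.
  by rewrite nth_s //; [rewrite /n wf_mod | rewrite -/l -lk].
apply: (@leq_trans (Pl l (k %% n)%N.+1)); last exact: Pl_mono.
by rewrite PlS ltn_add2l -lk.
Qed.

Lemma count_J l k J M :
  (\sum_(j < J) \sum_(b < l (k + j)) (Pl l (k + j) + b == M))%N =
  ((Pl l k <= M) && (M < Pl l (k + J)))%N.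
Proof.
elim: J => [|J IH]; first by rewrite big_ord0 addn0 ltnNge; case: (Pl l k <= M)%N.
rewrite big_ord_recr /= IH count1 addnS PlS.
have := Pl_mono l (leq_addr J k).
case: (leqP (Pl l k) M) => h1; case: (leqP (Pl l (k + J)) M) => h2;
  case: (ltnP M (Pl l (k + J))) => h3; case: (ltnP M (Pl l (k + J) + l (k + J))) => h4 /=; lia.
Qed.

Lemma sp_decode U V W0 k M J : (0 < size W0)%N ->
  (Pl (lb U V W0) k <= M)%N -> (M < Pl (lb U V W0) (k + J))%N ->
  (subst_word U V W0)`_(M %% Pl (lb U V W0) (size W0)) =
  \sum_(j < J) \sum_(b < lb U V W0 (k + j))
     (if (Pl (lb U V W0) (k + j) + b == M)%N then (blk U V (wf W0 (k + j)))`_b else 0).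
Proof.
move=> Wn h1 h2; set X := _`_ _.
transitivity (\sum_(j < J) \sum_(b < lb U V W0 (k + j))
     (Pl (lb U V W0) (k + j) + b == M)%N%:R * X).
  under eq_bigr do rewrite -big_distrl /= -natr_sum.
  by rewrite -big_distrl /= -natr_sum count_J h1 h2 mul1r.
apply: eq_bigr => j _; apply: eq_bigr => b hb.
case: eqP => [e|]; last by rewrite mul0r.
by rewrite mul1r /X -e sp_blk.
Qed.

Definition Phi U V (f j : nat) (x y : bool) (c : nat) : int :=
  \sum_(a < size (blk U V x)) \sum_(b < size (blk U V y))
    (if (c * size U + (j - c) * size V + b == a + f)%N
     then (blk U V x)`_a * (blk U V y)`_b else 0).

Lemma corr_repr U V W0 f : (0 < size U)%N -> (0 < size V)%N -> (0 < size W0)%N ->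
  (f < size (subst_word U V W0))%N ->
  corr (subst_word U V W0) f =
  \sum_(k < size W0) \sum_(j < 2 * size (subst_word U V W0))
     Phi U V f j (wf W0 k) (wf W0 (k + j)) (cntf W0 k j).
Proof.
move=> Up Vp Wn hf.
have hN := size_s U V W0.
set s := subst_word U V W0 in hN hf *.
set l := lb U V W0 in hN *.
set J := (2 * size s)%N.
have lpos i : (0 < l i)%N by rewrite /l /lb /blk; case: wf.
have LJ k j : (j <= \sum_(i < j) l (k + i))%N.
  elim: j => [|j IH]; first by rewrite big_ord0.
  by rewrite big_ord_recr /= -addn1 leq_add // lpos.
transitivity (\sum_(0 <= m < Pl l (size W0))
   s`_(m %% Pl l (size W0)) * s`_((m + f) %% Pl l (size W0))).
  rewrite /corr /= hN big_mkord; apply: eq_bigr => m _.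
  by rewrite (modn_small (ltn_ord m)).
rewrite decomp; apply: eq_bigr => k _.
transitivity (\sum_(a < l k) (blk U V (wf W0 k))`_a *
   \sum_(j < J) \sum_(b < lb U V W0 (k + j))
     (if (Pl (lb U V W0) (k + j) + b == Pl l k + a + f)%N
      then (blk U V (wf W0 (k + j)))`_b else 0)).
  apply: eq_bigr => a _.
  rewrite /s sp_blk // -sp_decode //; first by rewrite -addnA leq_addr.
  rewrite Pl_add -!addnA ltn_add2l.
  apply: (@leq_trans J); last exact: LJ.
  have := lb_le U V k Wn; rewrite -/l -hN /J; have := ltn_ord a; lia.
under eq_bigr do rewrite mulr_sumr.
rewrite exchange_big /=; apply: eq_bigr => j _.
rewrite /Phi; apply: eq_bigr => a _; rewrite mulr_sumr; apply: eq_bigr => b _.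
rewrite Pl_add -!addnA eqn_add2l Lsum.
by rewrite addnA; case: ifP; rewrite ?mulr0.
Qed.


Lemma size_subst_rev U V W :
  size (subst_word U V (rev W)) = size (subst_word U V W).
Proof.
by rewrite /subst_word !size_flatten /shape !map_rev sumn_rev.
Qed.

Theorem mainTheorem8 (U V : seq int) (W : seq bool) :
  pm1_word U -> pm1_word V -> (0 < size U)%N -> (0 < size V)%N ->
  (0 < size W)%N ->
  forall f : nat, (f < size (subst_word U V W))%N ->
    corr (subst_word U V (rev W)) f = corr (subst_word U V W) f.
Proof.
move=> _ _ Up Vp Wn f hf.
rewrite corr_repr ?size_rev ?size_subst_rev // corr_repr //.
rewrite exchange_big [RHS]exchange_big /=; apply: eq_bigr => j _.
rewrite refl_sum //.
have := sym_sum j (fun x y c => Phi U V f j x y (c - y)) Wn.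
rewrite /= => H.
transitivity (\sum_(k < size W) Phi U V f j (wf W (k + j)) (wf W k) (cntf W k j.+1 - wf W k)).
  by apply: eq_bigr => k _; rewrite cntfS addKn.
rewrite -H; apply: eq_bigr => k _; by rewrite cntfR addnK.
Qed.
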